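(* Let $m,n,c$ be positive integers such that $c\equiv0\pmod4$, $m\equiv n\equiv1\pmod4$, and $m,n\geqslant9$. Then there exists an $\mathrm{IHS}(m,n;c)$.
   Context: An integer Heffter array set $\mathrm{IHS}(m,n;c)$ is a collection of $c$ completely filled $m\times n$ arrays with integer entries such that the absolute values of all $mnc$ entries (taken over all $c$ arrays) are exactly $1,2,\ldots,mnc$, each occurring exactly once, and in every array the entries of each row and of each column sum to $0$. *)

(* Defs.v *)
From mathcomp Require Import all_boot all_order all_algebra.
Set Implicit Arguments. Unset Strict Implicit. Unset Printing Implicit Defensive.
Import GRing.Theory Num.Theory.
Local Open Scope ring_scope.

Definition is_IHS (m n c : nat) (A : 'I_c -> 'I_m -> 'I_n -> int) : Prop :=
  [/\
      (forall k i j, (1 <= `|A k i j|%N <= m * n * c)%N),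
      (forall k i j k' i' j', `|A k i j|%N = `|A k' i' j'|%N ->
          (k, i, j) = (k', i', j')),
      (forall v : nat, (1 <= v <= m * n * c)%N ->
          exists k i j, `|A k i j|%N = v),
      (forall k i, \sum_(j < n) A k i j = 0) &
      (forall k j, \sum_(i < m) A k i j = 0)].

Definition IHS_exists (m n c : nat) : Prop :=
  exists A : 'I_c -> 'I_m -> 'I_n -> int, is_IHS A.

(* Main.v *)
Require Import Defs.
From mathcomp Require Import all_boot all_order all_algebra.
From mathcomp Require Import zify ring lra.
Set Implicit Arguments. Unset Strict Implicit. Unset Printing Implicit Defensive.
Import GRing.Theory Num.Theory.
Local Open Scope ring_scope.
Definition e44 (p r : nat) : int :=
  match p, r with
  | 0, 0 => 1%:Z
  | 0, 1 => (- 1%:Z)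
  | 0, 2 => (- 1%:Z)
  | 0, 3 => 1%:Z
  | 1, 0 => (- 1%:Z)
  | 1, 1 => 1%:Z
  | 1, 2 => 1%:Z
  | 1, 3 => (- 1%:Z)
  | 2, 0 => (- 1%:Z)
  | 2, 1 => 1%:Z
  | 2, 2 => 1%:Z
  | 2, 3 => (- 1%:Z)
  | 3, 0 => 1%:Z
  | 3, 1 => (- 1%:Z)
  | 3, 2 => (- 1%:Z)
  | 3, 3 => 1%:Z
  | _, _ => 0%:Z
  end.
Definition s44 (p r : nat) : nat :=
  match p, r with
  | 0, 0 => 0
  | 0, 1 => 1
  | 0, 2 => 2
  | 0, 3 => 3
  | 1, 0 => 4
  | 1, 1 => 5
  | 1, 2 => 6
  | 1, 3 => 7
  | 2, 0 => 8
  | 2, 1 => 9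
  | 2, 2 => 10
  | 2, 3 => 11
  | 3, 0 => 12
  | 3, 1 => 13
  | 3, 2 => 14
  | 3, 3 => 15
  | _, _ => 0
  end.
Definition e45 (p r : nat) : int :=
  match p, r with
  | 0, 0 => 1%:Z
  | 0, 1 => (- 1%:Z)
  | 0, 2 => 1%:Z
  | 0, 3 => (- 1%:Z)
  | 0, 4 => (- 1%:Z)
  | 1, 0 => (- 1%:Z)
  | 1, 1 => 1%:Z
  | 1, 2 => (- 1%:Z)
  | 1, 3 => 1%:Z
  | 1, 4 => 1%:Z
  | 2, 0 => (- 1%:Z)
  | 2, 1 => 1%:Z
  | 2, 2 => (- 1%:Z)
  | 2, 3 => 1%:Z
  | 2, 4 => (- 1%:Z)
  | 3, 0 => 1%:Z
  | 3, 1 => (- 1%:Z)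
  | 3, 2 => 1%:Z
  | 3, 3 => (- 1%:Z)
  | 3, 4 => 1%:Z
  | _, _ => 0%:Z
  end.
Definition l45 (p r : nat) : nat :=
  match p, r with
  | 0, 0 => 1
  | 0, 1 => 8
  | 0, 2 => 18
  | 0, 3 => 6
  | 0, 4 => 4
  | 1, 0 => 3
  | 1, 1 => 9
  | 1, 2 => 19
  | 1, 3 => 5
  | 1, 4 => 7
  | 2, 0 => 0
  | 2, 1 => 16
  | 2, 2 => 14
  | 2, 3 => 12
  | 2, 4 => 13
  | 3, 0 => 2
  | 3, 1 => 17
  | 3, 2 => 15
  | 3, 3 => 11
  | 3, 4 => 10
  | _, _ => 0
  end.
Definition e55 (t p r : nat) : int :=
  match t, p, r with
  | 0, 0, 0 => 1%:Z
  | 0, 0, 1 => 1%:Z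
  | 0, 0, 2 => (- 1%:Z)
  | 0, 0, 3 => (- 1%:Z)
  | 0, 0, 4 => 1%:Z
  | 0, 1, 0 => 1%:Z
  | 0, 1, 1 => 1%:Z
  | 0, 1, 2 => 1%:Z
  | 0, 1, 3 => (- 1%:Z)
  | 0, 1, 4 => (- 1%:Z)
  | 0, 2, 0 => (- 1%:Z)
  | 0, 2, 1 => 1%:Z
  | 0, 2, 2 => 1%:Z
  | 0, 2, 3 => 1%:Z
  | 0, 2, 4 => (- 1%:Z)
  | 0, 3, 0 => (- 1%:Z)
  | 0, 3, 1 => (- 1%:Z)
  | 0, 3, 2 => 1%:Z
  | 0, 3, 3 => 1%:Z
  | 0, 3, 4 => 1%:Z
  | 0, 4, 0 => 1%:Z
  | 0, 4, 1 => (- 1%:Z)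
  | 0, 4, 2 => (- 1%:Z)
  | 0, 4, 3 => 1%:Z
  | 0, 4, 4 => 1%:Z
  | 1, 0, 0 => 1%:Z
  | 1, 0, 1 => (- 1%:Z)
  | 1, 0, 2 => (- 1%:Z)
  | 1, 0, 3 => (- 1%:Z)
  | 1, 0, 4 => 1%:Z
  | 1, 1, 0 => 1%:Z
  | 1, 1, 1 => 1%:Z
  | 1, 1, 2 => (- 1%:Z)
  | 1, 1, 3 => (- 1%:Z)
  | 1, 1, 4 => (- 1%:Z)
  | 1, 2, 0 => (- 1%:Z)
  | 1, 2, 1 => 1%:Z
  | 1, 2, 2 => 1%:Z
  | 1, 2, 3 => (- 1%:Z)
  | 1, 2, 4 => (- 1%:Z)
  | 1, 3, 0 => (- 1%:Z)
  | 1, 3, 1 => (- 1%:Z)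
  | 1, 3, 2 => 1%:Z
  | 1, 3, 3 => 1%:Z
  | 1, 3, 4 => (- 1%:Z)
  | 1, 4, 0 => (- 1%:Z)
  | 1, 4, 1 => (- 1%:Z)
  | 1, 4, 2 => (- 1%:Z)
  | 1, 4, 3 => 1%:Z
  | 1, 4, 4 => 1%:Z
  | 2, 0, 0 => (- 1%:Z)
  | 2, 0, 1 => (- 1%:Z)
  | 2, 0, 2 => 1%:Z
  | 2, 0, 3 => (- 1%:Z)
  | 2, 0, 4 => 1%:Z
  | 2, 1, 0 => 1%:Z
  | 2, 1, 1 => (- 1%:Z)
  | 2, 1, 2 => (- 1%:Z)
  | 2, 1, 3 => 1%:Z
  | 2, 1, 4 => (- 1%:Z)
  | 2, 2, 0 => (- 1%:Z)
  | 2, 2, 1 => 1%:Z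
  | 2, 2, 2 => (- 1%:Z)
  | 2, 2, 3 => (- 1%:Z)
  | 2, 2, 4 => 1%:Z
  | 2, 3, 0 => 1%:Z
  | 2, 3, 1 => (- 1%:Z)
  | 2, 3, 2 => 1%:Z
  | 2, 3, 3 => (- 1%:Z)
  | 2, 3, 4 => (- 1%:Z)
  | 2, 4, 0 => (- 1%:Z)
  | 2, 4, 1 => 1%:Z
  | 2, 4, 2 => (- 1%:Z)
  | 2, 4, 3 => 1%:Z
  | 2, 4, 4 => (- 1%:Z)
  | 3, 0, 0 => (- 1%:Z)
  | 3, 0, 1 => 1%:Z
  | 3, 0, 2 => 1%:Z
  | 3, 0, 3 => 1%:Z
  | 3, 0, 4 => (- 1%:Z)
  | 3, 1, 0 => (- 1%:Z)
  | 3, 1, 1 => (- 1%:Z)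
  | 3, 1, 2 => 1%:Z
  | 3, 1, 3 => 1%:Z
  | 3, 1, 4 => 1%:Z
  | 3, 2, 0 => 1%:Z
  | 3, 2, 1 => (- 1%:Z)
  | 3, 2, 2 => (- 1%:Z)
  | 3, 2, 3 => 1%:Z
  | 3, 2, 4 => 1%:Z
  | 3, 3, 0 => 1%:Z
  | 3, 3, 1 => 1%:Z
  | 3, 3, 2 => (- 1%:Z)
  | 3, 3, 3 => (- 1%:Z)
  | 3, 3, 4 => 1%:Z
  | 3, 4, 0 => 1%:Z
  | 3, 4, 1 => 1%:Z
  | 3, 4, 2 => 1%:Z
  | 3, 4, 3 => (- 1%:Z)
  | 3, 4, 4 => (- 1%:Z)
  | _, _, _ => 0%:Z
  end.
Definition l55 (t p r : nat) : nat :=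
  match t, p, r with
  | 0, 0, 0 => 2
  | 0, 0, 1 => 11
  | 0, 0, 2 => 13
  | 0, 0, 3 => 15
  | 0, 0, 4 => 14
  | 0, 1, 0 => 14
  | 0, 1, 1 => 2
  | 0, 1, 2 => 11
  | 0, 1, 3 => 13
  | 0, 1, 4 => 15
  | 0, 2, 0 => 15
  | 0, 2, 1 => 14
  | 0, 2, 2 => 2
  | 0, 2, 3 => 11
  | 0, 2, 4 => 13
  | 0, 3, 0 => 13
  | 0, 3, 1 => 15
  | 0, 3, 2 => 14
  | 0, 3, 3 => 2
  | 0, 3, 4 => 11
  | 0, 4, 0 => 11
  | 0, 4, 1 => 13
  | 0, 4, 2 => 15
  | 0, 4, 3 => 14
  | 0, 4, 4 => 2
  | 1, 0, 0 => 3
  | 1, 0, 1 => 4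
  | 1, 0, 2 => 7
  | 1, 0, 3 => 9
  | 1, 0, 4 => 18
  | 1, 1, 0 => 18
  | 1, 1, 1 => 3
  | 1, 1, 2 => 4
  | 1, 1, 3 => 7
  | 1, 1, 4 => 9
  | 1, 2, 0 => 9
  | 1, 2, 1 => 18
  | 1, 2, 2 => 3
  | 1, 2, 3 => 4
  | 1, 2, 4 => 7
  | 1, 3, 0 => 7
  | 1, 3, 1 => 9
  | 1, 3, 2 => 18
  | 1, 3, 3 => 3
  | 1, 3, 4 => 4
  | 1, 4, 0 => 4
  | 1, 4, 1 => 7
  | 1, 4, 2 => 9
  | 1, 4, 3 => 18
  | 1, 4, 4 => 3
  | 2, 0, 0 => 0
  | 2, 0, 1 => 10
  | 2, 0, 2 => 12
  | 2, 0, 3 => 17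
  | 2, 0, 4 => 16
  | 2, 1, 0 => 16
  | 2, 1, 1 => 0
  | 2, 1, 2 => 10
  | 2, 1, 3 => 12
  | 2, 1, 4 => 17
  | 2, 2, 0 => 17
  | 2, 2, 1 => 16
  | 2, 2, 2 => 0
  | 2, 2, 3 => 10
  | 2, 2, 4 => 12
  | 2, 3, 0 => 12
  | 2, 3, 1 => 17
  | 2, 3, 2 => 16
  | 2, 3, 3 => 0
  | 2, 3, 4 => 10
  | 2, 4, 0 => 10
  | 2, 4, 1 => 12
  | 2, 4, 2 => 17
  | 2, 4, 3 => 16
  | 2, 4, 4 => 0
  | 3, 0, 0 => 1
  | 3, 0, 1 => 5
  | 3, 0, 2 => 6
  | 3, 0, 3 => 8
  | 3, 0, 4 => 19
  | 3, 1, 0 => 19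
  | 3, 1, 1 => 1
  | 3, 1, 2 => 5
  | 3, 1, 3 => 6
  | 3, 1, 4 => 8
  | 3, 2, 0 => 8
  | 3, 2, 1 => 19
  | 3, 2, 2 => 1
  | 3, 2, 3 => 5
  | 3, 2, 4 => 6
  | 3, 3, 0 => 6
  | 3, 3, 1 => 8
  | 3, 3, 2 => 19
  | 3, 3, 3 => 1
  | 3, 3, 4 => 5
  | 3, 4, 0 => 5
  | 3, 4, 1 => 6
  | 3, 4, 2 => 8
  | 3, 4, 3 => 19
  | 3, 4, 4 => 1
  | _, _, _ => 0
  end.
Definition u55 (t p r : nat) : nat :=
  match t, p, r with
  | 0, 0, 0 => 0
  | 0, 0, 1 => 3
  | 0, 0, 2 => 0
  | 0, 0, 3 => 1
  | 0, 0, 4 => 2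
  | 0, 1, 0 => 1
  | 0, 1, 1 => 1
  | 0, 1, 2 => 4
  | 0, 1, 3 => 2
  | 0, 1, 4 => 3
  | 0, 2, 0 => 0
  | 0, 2, 1 => 0
  | 0, 2, 2 => 2
  | 0, 2, 3 => 0
  | 0, 2, 4 => 4
  | 0, 3, 0 => 1
  | 0, 3, 1 => 2
  | 0, 3, 2 => 4
  | 0, 3, 3 => 3
  | 0, 3, 4 => 1
  | 0, 4, 0 => 2
  | 0, 4, 1 => 3
  | 0, 4, 2 => 4
  | 0, 4, 3 => 3
  | 0, 4, 4 => 4
  | 1, 0, 0 => 0
  | 1, 0, 1 => 3
  | 1, 0, 2 => 0
  | 1, 0, 3 => 1
  | 1, 0, 4 => 2
  | 1, 1, 0 => 1
  | 1, 1, 1 => 1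
  | 1, 1, 2 => 4
  | 1, 1, 3 => 2
  | 1, 1, 4 => 3
  | 1, 2, 0 => 0
  | 1, 2, 1 => 0
  | 1, 2, 2 => 2
  | 1, 2, 3 => 0
  | 1, 2, 4 => 4
  | 1, 3, 0 => 1
  | 1, 3, 1 => 2
  | 1, 3, 2 => 4
  | 1, 3, 3 => 3
  | 1, 3, 4 => 1
  | 1, 4, 0 => 2
  | 1, 4, 1 => 3
  | 1, 4, 2 => 4
  | 1, 4, 3 => 3
  | 1, 4, 4 => 4
  | 2, 0, 0 => 0
  | 2, 0, 1 => 3
  | 2, 0, 2 => 0
  | 2, 0, 3 => 1
  | 2, 0, 4 => 2
  | 2, 1, 0 => 1
  | 2, 1, 1 => 1
  | 2, 1, 2 => 4
  | 2, 1, 3 => 2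
  | 2, 1, 4 => 3
  | 2, 2, 0 => 0
  | 2, 2, 1 => 0
  | 2, 2, 2 => 2
  | 2, 2, 3 => 0
  | 2, 2, 4 => 4
  | 2, 3, 0 => 1
  | 2, 3, 1 => 2
  | 2, 3, 2 => 4
  | 2, 3, 3 => 3
  | 2, 3, 4 => 1
  | 2, 4, 0 => 2
  | 2, 4, 1 => 3
  | 2, 4, 2 => 4
  | 2, 4, 3 => 3
  | 2, 4, 4 => 4
  | 3, 0, 0 => 0
  | 3, 0, 1 => 3
  | 3, 0, 2 => 0
  | 3, 0, 3 => 1
  | 3, 0, 4 => 2
  | 3, 1, 0 => 1
  | 3, 1, 1 => 1
  | 3, 1, 2 => 4
  | 3, 1, 3 => 2
  | 3, 1, 4 => 3
  | 3, 2, 0 => 0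
  | 3, 2, 1 => 0
  | 3, 2, 2 => 2
  | 3, 2, 3 => 0
  | 3, 2, 4 => 4
  | 3, 3, 0 => 1
  | 3, 3, 1 => 2
  | 3, 3, 2 => 4
  | 3, 3, 3 => 3
  | 3, 3, 4 => 1
  | 3, 4, 0 => 2
  | 3, 4, 1 => 3
  | 3, 4, 2 => 4
  | 3, 4, 3 => 3
  | 3, 4, 4 => 4
  | _, _, _ => 0
  end.

Definition MagN (N l tau : nat) : nat :=
  if (l < 4)%N then (if (l < 2)%N then 2*(N.-1 - tau) + l + 1 else 2*N + 2*tau + (l-2) + 1)%N
  else if odd l then (l*N + tau + 1)%N else (l*N + (N.-1 - tau) + 1)%N.

Definition cN (l : nat) : int := if (l < 4)%N then 2 else if odd l then l%:Z else (l.+1)%:Z.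
Definition cT (l : nat) : int := if (l < 4)%N then (if (l < 2)%N then -2 else 2) else if odd l then 1 else -1.
Definition cC (l : nat) : int :=
  match l with 0 => -1 | 1 => 0 | 2 => 1 | 3 => 2 | _ => if odd l then 1 else 0 end.

Lemma MagZ N l tau : (tau < N)%N -> (MagN N l tau)%:Z = cN l * N%:Z + cT l * tau%:Z + cC l.
Proof.
move=> ht; rewrite /MagN /cN /cT /cC.
case: l => [|[|[|[|l]]]] /=; try lia.
case: ifP => _; nia.
Qed.

Lemma sum_blocks (f : nat -> int) B :
  \sum_(j < 4*B + 5) f j =
  \sum_(J < B) (f (4*J+0)%N + f (4*J+1)%N + f (4*J+2)%N + f (4*J+3)%N)
  + (f (4*B+0)%N + f (4*B+1)%N + f (4*B+2)%N + f (4*B+3)%N + f (4*B+4)%N).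
Proof.
elim: B => [|B IH].
  by rewrite big_ord0 !big_ord_recr big_ord0 /= !add0r.
have -> : (4 * B.+1 + 5 = (4*B+5).+4)%N by lia.
rewrite !big_ord_recr /= IH.
have e1 : (4*B+5 = 4*B.+1+1)%N by lia.
have e2 : ((4*B+5).+1 = 4*B.+1+2)%N by lia.
have e3 : ((4*B+5).+2 = 4*B.+1+3)%N by lia.
have e4 : ((4*B+5).+3 = 4*B.+1+4)%N by lia.
have e0 : (4*B+4 = 4*B.+1+0)%N by lia.
rewrite e4 e3 e2 e1 e0.
ring.
Qed.

Definition U (A B : nat) := (4*A + 4*B + 5)%N.
Definition NN A B Q := (Q * U A B)%N.
Definition NA A B Q := (4*Q*A*B)%N.

Definition F (A B Q k i j : nat) : int :=
  if (i < 4*A)%N then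
    if (j < 4*B)%N then
      e44 (i %% 4) (j %% 4) * (20 * NN A B Q + NA A B Q * s44 (i %% 4) (j %% 4) + ((k*A + i %/ 4)*B + j %/ 4) + 1)%N%:Z
    else e45 (i %% 4) (j - 4*B) *
      (MagN (NN A B Q) (l45 (i %% 4) (j - 4*B)) (k %/ 4 * U A B + k %% 4 * A + i %/ 4))%:Z
  else if (j < 4*B)%N then
      e45 (j %% 4) (i - 4*A) *
      (MagN (NN A B Q) (l45 (j %% 4) (i - 4*A)) (k %/ 4 * U A B + 4*A + k %% 4 * B + j %/ 4))%:Z
  else e55 (k %% 4) (i - 4*A) (j - 4*B) *
      (MagN (NN A B Q) (l55 (k %% 4) (i - 4*A) (j - 4*B))
         (k %/ 4 * U A B + 4*A + 4*B + u55 (k %% 4) (i - 4*A) (j - 4*B)))%:Z.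

Lemma FA A B Q k I J p r : (I < A)%N -> (J < B)%N -> (p < 4)%N -> (r < 4)%N ->
  F A B Q k (4*I+p) (4*J+r) =
  e44 p r * ((20 * NN A B Q + ((k*A + I)*B + J) + 1)%N%:Z + (NA A B Q)%:Z * (s44 p r)%:Z).
Proof.
move=> hI hJ hp hr; rewrite /F.
have -> : (4*I+p < 4*A)%N by lia.
have -> : (4*J+r < 4*B)%N by lia.
have -> : ((4*I+p) %% 4 = p)%N by lia.
have -> : ((4*J+r) %% 4 = r)%N by lia.
have -> : ((4*I+p) %/ 4 = I)%N by lia.
have -> : ((4*J+r) %/ 4 = J)%N by lia.
congr (_ * _); lia.
Qed.

Lemma FB45 A B Q k I p r : (I < A)%N -> (p < 4)%N -> (r < 5)%N ->
  F A B Q k (4*I+p) (4*B+r) =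
  e45 p r * (MagN (NN A B Q) (l45 p r) (k %/ 4 * U A B + k %% 4 * A + I))%:Z.
Proof.
move=> hI hp hr; rewrite /F.
have -> : (4*I+p < 4*A)%N by lia.
have -> : (4*B+r < 4*B)%N = false by lia.
have -> : ((4*I+p) %% 4 = p)%N by lia.
have -> : ((4*I+p) %/ 4 = I)%N by lia.
have -> : (4*B+r - 4*B = r)%N by lia.
by [].
Qed.

Lemma FB54 A B Q k J p r : (J < B)%N -> (p < 5)%N -> (r < 4)%N ->
  F A B Q k (4*A+p) (4*J+r) =
  e45 r p * (MagN (NN A B Q) (l45 r p) (k %/ 4 * U A B + 4*A + k %% 4 * B + J))%:Z.
Proof.
move=> hJ hp hr; rewrite /F.
have -> : (4*A+p < 4*A)%N = false by lia.
have -> : (4*J+r < 4*B)%N by lia.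
have -> : ((4*J+r) %% 4 = r)%N by lia.
have -> : ((4*J+r) %/ 4 = J)%N by lia.
have -> : (4*A+p - 4*A = p)%N by lia.
by [].
Qed.

Lemma FC A B Q k p r : (p < 5)%N -> (r < 5)%N ->
  F A B Q k (4*A+p) (4*B+r) =
  e55 (k %% 4) p r * (MagN (NN A B Q) (l55 (k %% 4) p r)
         (k %/ 4 * U A B + 4*A + 4*B + u55 (k %% 4) p r))%:Z.
Proof.
move=> hp hr; rewrite /F.
have -> : (4*A+p < 4*A)%N = false by lia.
have -> : (4*B+r < 4*B)%N = false by lia.
have -> : (4*A+p - 4*A = p)%N by lia.
have -> : (4*B+r - 4*B = r)%N by lia.
by [].
Qed.

Lemma L44row p (K X : int) : (p < 4)%N ->
  e44 p 0 * (K + X * (s44 p 0)%:Z) + e44 p 1 * (K + X * (s44 p 1)%:Z) +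
  e44 p 2 * (K + X * (s44 p 2)%:Z) + e44 p 3 * (K + X * (s44 p 3)%:Z) = 0.
Proof. by case: p => [|[|[|[|p]]]] //= _; ring. Qed.

Lemma L44col r (K X : int) : (r < 4)%N ->
  e44 0 r * (K + X * (s44 0 r)%:Z) + e44 1 r * (K + X * (s44 1 r)%:Z) +
  e44 2 r * (K + X * (s44 2 r)%:Z) + e44 3 r * (K + X * (s44 3 r)%:Z) = 0.
Proof. by case: r => [|[|[|[|r]]]] //= _; ring. Qed.

Definition Mz (l : nat) (Nz tz : int) := cN l * Nz + cT l * tz + cC l.

Lemma L45row p (Nz tz : int) : (p < 4)%N ->
  e45 p 0 * Mz (l45 p 0) Nz tz + e45 p 1 * Mz (l45 p 1) Nz tz + e45 p 2 * Mz (l45 p 2) Nz tz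
  + e45 p 3 * Mz (l45 p 3) Nz tz + e45 p 4 * Mz (l45 p 4) Nz tz = 0.
Proof. by rewrite /Mz /cN /cT /cC; case: p => [|[|[|[|p]]]] //= _; ring. Qed.

Lemma L45col r (Nz tz : int) : (r < 5)%N ->
  e45 0 r * Mz (l45 0 r) Nz tz + e45 1 r * Mz (l45 1 r) Nz tz + e45 2 r * Mz (l45 2 r) Nz tz
  + e45 3 r * Mz (l45 3 r) Nz tz = 0.
Proof. by rewrite /Mz /cN /cT /cC; case: r => [|[|[|[|[|r]]]]] //= _; ring. Qed.

Lemma L55row t p (Nz bz : int) : (t < 4)%N -> (p < 5)%N ->
  e55 t p 0 * Mz (l55 t p 0) Nz (bz + (u55 t p 0)%:Z) + e55 t p 1 * Mz (l55 t p 1) Nz (bz + (u55 t p 1)%:Z)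
  + e55 t p 2 * Mz (l55 t p 2) Nz (bz + (u55 t p 2)%:Z) + e55 t p 3 * Mz (l55 t p 3) Nz (bz + (u55 t p 3)%:Z)
  + e55 t p 4 * Mz (l55 t p 4) Nz (bz + (u55 t p 4)%:Z) = 0.
Proof. by rewrite /Mz /cN /cT /cC; case: t => [|[|[|[|t]]]] //= _; case: p => [|[|[|[|[|p]]]]] //= _; ring. Qed.

Lemma L55col t r (Nz bz : int) : (t < 4)%N -> (r < 5)%N ->
  e55 t 0 r * Mz (l55 t 0 r) Nz (bz + (u55 t 0 r)%:Z) + e55 t 1 r * Mz (l55 t 1 r) Nz (bz + (u55 t 1 r)%:Z)
  + e55 t 2 r * Mz (l55 t 2 r) Nz (bz + (u55 t 2 r)%:Z) + e55 t 3 r * Mz (l55 t 3 r) Nz (bz + (u55 t 3 r)%:Z)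
  + e55 t 4 r * Mz (l55 t 4 r) Nz (bz + (u55 t 4 r)%:Z) = 0.
Proof. by rewrite /Mz /cN /cT /cC; case: t => [|[|[|[|t]]]] //= _; case: r => [|[|[|[|[|r]]]]] //= _; ring. Qed.

Lemma tau_lt Q U0 h loc : (h < Q)%N -> (loc < U0)%N -> (h * U0 + loc < Q * U0)%N.
Proof. move=> hh hl; nia. Qed.

Lemma hQ Q k : (k < 4*Q)%N -> (k %/ 4 < Q)%N.
Proof. lia. Qed.

Lemma row1 A B Q k I p : (k < 4*Q)%N -> (I < A)%N -> (p < 4)%N ->
  \sum_(j < 4*B+5) F A B Q k (4*I+p) j = 0.
Proof.
move=> hk hI hp.
have ht : (k %/ 4 * U A B + k %% 4 * A + I < NN A B Q)%N.
  rewrite -addnA /NN; apply: tau_lt; first exact: hQ.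
  rewrite /U; nia.
rewrite sum_blocks.
have -> : \sum_(J < B) (F A B Q k (4*I+p) (4*J+0)%N + F A B Q k (4*I+p) (4*J+1)%N
     + F A B Q k (4*I+p) (4*J+2)%N + F A B Q k (4*I+p) (4*J+3)%N) = 0.
  apply: big1 => J _.
  rewrite !FA //.
  exact: L44row.
rewrite add0r !FB45 // !MagZ //.
exact: L45row.
Qed.

Lemma u55_lt t p r : (u55 t p r < 5)%N.
Proof.
rewrite /u55; case: t => [|[|[|[|t]]]]; case: p => [|[|[|[|[|p]]]]]; case: r => [|[|[|[|[|r]]]]] //.
Qed.

Lemma row2 A B Q k p : (k < 4*Q)%N -> (p < 5)%N ->
  \sum_(j < 4*B+5) F A B Q k (4*A+p) j = 0.
Proof.
move=> hk hp.
have hk4 : (k %% 4 < 4)%N by rewrite ltn_mod.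
rewrite sum_blocks.
have -> : \sum_(J < B) (F A B Q k (4*A+p) (4*J+0)%N + F A B Q k (4*A+p) (4*J+1)%N
     + F A B Q k (4*A+p) (4*J+2)%N + F A B Q k (4*A+p) (4*J+3)%N) = 0.
  apply: big1 => J _.
  have ht : (k %/ 4 * U A B + 4*A + k %% 4 * B + J < NN A B Q)%N.
    rewrite -!addnA /NN; apply: tau_lt; first exact: hQ.
    have := ltn_ord J; rewrite /U; nia.
  rewrite !FB54 // !MagZ //.
  exact: L45col.
rewrite add0r !FC //.
have hu : forall r, (k %/ 4 * U A B + 4*A + 4*B + u55 (k %% 4) p r < NN A B Q)%N.
  move=> r; rewrite -!addnA /NN; apply: tau_lt; first exact: hQ.
  have := u55_lt (k %% 4) p r; rewrite /U; lia.
rewrite !MagZ // !PoszD.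
exact: L55row.
Qed.

Lemma col1 A B Q k J r : (k < 4*Q)%N -> (J < B)%N -> (r < 4)%N ->
  \sum_(i < 4*A+5) F A B Q k i (4*J+r) = 0.
Proof.
move=> hk hJ hr.
rewrite (sum_blocks (fun i => F A B Q k i (4*J+r))) /=.
have -> : \sum_(I < A) (F A B Q k (4*I+0)%N (4*J+r) + F A B Q k (4*I+1)%N (4*J+r)
     + F A B Q k (4*I+2)%N (4*J+r) + F A B Q k (4*I+3)%N (4*J+r)) = 0.
  apply: big1 => I _.
  rewrite !FA //.
  exact: L44col.
have ht : (k %/ 4 * U A B + 4*A + k %% 4 * B + J < NN A B Q)%N.
  rewrite -!addnA /NN; apply: tau_lt; first exact: hQ.
  have : (k %% 4 < 4)%N by rewrite ltn_mod.
  rewrite /U; nia.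
rewrite add0r !FB54 // !MagZ //.
exact: L45row.
Qed.

Lemma col2 A B Q k r : (k < 4*Q)%N -> (r < 5)%N ->
  \sum_(i < 4*A+5) F A B Q k i (4*B+r) = 0.
Proof.
move=> hk hr.
rewrite (sum_blocks (fun i => F A B Q k i (4*B+r))) /=.
have -> : \sum_(I < A) (F A B Q k (4*I+0)%N (4*B+r) + F A B Q k (4*I+1)%N (4*B+r)
     + F A B Q k (4*I+2)%N (4*B+r) + F A B Q k (4*I+3)%N (4*B+r)) = 0.
  apply: big1 => I _.
  have ht : (k %/ 4 * U A B + k %% 4 * A + I < NN A B Q)%N.
    rewrite -addnA /NN; apply: tau_lt; first exact: hQ.
    have : (k %% 4 < 4)%N by rewrite ltn_mod.
    have := ltn_ord I; rewrite /U; nia.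
  rewrite !FB45 // !MagZ //.
  exact: L45col.
rewrite add0r !FC //.
have hu : forall p, (k %/ 4 * U A B + 4*A + 4*B + u55 (k %% 4) p r < NN A B Q)%N.
  move=> p; rewrite -!addnA /NN; apply: tau_lt; first exact: hQ.
  have := u55_lt (k %% 4) p r; rewrite /U; lia.
rewrite !MagZ // !PoszD.
apply: L55col => //.
by rewrite ltn_mod.
Qed.

Lemma rowsum A B Q k i : (k < 4*Q)%N -> (i < 4*A+5)%N ->
  \sum_(j < 4*B+5) F A B Q k i j = 0.
Proof.
move=> hk hi.
case: (ltnP i (4*A)) => h.
- have -> : i = (4 * (i %/ 4) + i %% 4)%N by lia.
  apply: row1 => //; [lia | by rewrite ltn_mod].
- have -> : i = (4 * A + (i - 4*A))%N by lia.
  apply: row2 => //; lia.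
Qed.

Lemma colsum A B Q k j : (k < 4*Q)%N -> (j < 4*B+5)%N ->
  \sum_(i < 4*A+5) F A B Q k i j = 0.
Proof.
move=> hk hj.
case: (ltnP j (4*B)) => h.
- have -> : j = (4 * (j %/ 4) + j %% 4)%N by lia.
  apply: col1 => //; [lia | by rewrite ltn_mod].
- have -> : j = (4 * B + (j - 4*B))%N by lia.
  apply: col2 => //; lia.
Qed.
Definition dec45 (l : nat) : nat * nat :=
  match l with
  | 0 => (2, 0)
  | 1 => (0, 0)
  | 2 => (3, 0)
  | 3 => (1, 0)
  | 4 => (0, 4)
  | 5 => (1, 3)
  | 6 => (0, 3)
  | 7 => (1, 4)
  | 8 => (0, 1)
  | 9 => (1, 1)
  | 10 => (3, 4)
  | 11 => (3, 3)
  | 12 => (2, 3)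
  | 13 => (2, 4)
  | 14 => (2, 2)
  | 15 => (3, 2)
  | 16 => (2, 1)
  | 17 => (3, 1)
  | 18 => (0, 2)
  | 19 => (1, 2)
  | _ => (0, 0)
  end.
Definition dec55 (l u : nat) : nat * nat * nat :=
  match l, u with
  | 0, 0 => (2, 0, 0)
  | 0, 1 => (2, 1, 1)
  | 0, 2 => (2, 2, 2)
  | 0, 3 => (2, 3, 3)
  | 0, 4 => (2, 4, 4)
  | 1, 0 => (3, 0, 0)
  | 1, 1 => (3, 1, 1)
  | 1, 2 => (3, 2, 2)
  | 1, 3 => (3, 3, 3)
  | 1, 4 => (3, 4, 4)
  | 2, 0 => (0, 0, 0)
  | 2, 1 => (0, 1, 1)
  | 2, 2 => (0, 2, 2)
  | 2, 3 => (0, 3, 3)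
  | 2, 4 => (0, 4, 4)
  | 3, 0 => (1, 0, 0)
  | 3, 1 => (1, 1, 1)
  | 3, 2 => (1, 2, 2)
  | 3, 3 => (1, 3, 3)
  | 3, 4 => (1, 4, 4)
  | 4, 0 => (1, 2, 3)
  | 4, 1 => (1, 3, 4)
  | 4, 2 => (1, 4, 0)
  | 4, 3 => (1, 0, 1)
  | 4, 4 => (1, 1, 2)
  | 5, 0 => (3, 2, 3)
  | 5, 1 => (3, 3, 4)
  | 5, 2 => (3, 4, 0)
  | 5, 3 => (3, 0, 1)
  | 5, 4 => (3, 1, 2)
  | 6, 0 => (3, 0, 2)
  | 6, 1 => (3, 3, 0)
  | 6, 2 => (3, 1, 3)
  | 6, 3 => (3, 4, 1)
  | 6, 4 => (3, 2, 4)
  | 7, 0 => (1, 0, 2)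
  | 7, 1 => (1, 3, 0)
  | 7, 2 => (1, 1, 3)
  | 7, 3 => (1, 4, 1)
  | 7, 4 => (1, 2, 4)
  | 8, 0 => (3, 2, 0)
  | 8, 1 => (3, 0, 3)
  | 8, 2 => (3, 3, 1)
  | 8, 3 => (3, 1, 4)
  | 8, 4 => (3, 4, 2)
  | 9, 0 => (1, 2, 0)
  | 9, 1 => (1, 0, 3)
  | 9, 2 => (1, 3, 1)
  | 9, 3 => (1, 1, 4)
  | 9, 4 => (1, 4, 2)
  | 10, 0 => (2, 2, 3)
  | 10, 1 => (2, 3, 4)
  | 10, 2 => (2, 4, 0)
  | 10, 3 => (2, 0, 1)
  | 10, 4 => (2, 1, 2)
  | 11, 0 => (0, 2, 3)
  | 11, 1 => (0, 3, 4)
  | 11, 2 => (0, 4, 0)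
  | 11, 3 => (0, 0, 1)
  | 11, 4 => (0, 1, 2)
  | 12, 0 => (2, 0, 2)
  | 12, 1 => (2, 3, 0)
  | 12, 2 => (2, 1, 3)
  | 12, 3 => (2, 4, 1)
  | 12, 4 => (2, 2, 4)
  | 13, 0 => (0, 0, 2)
  | 13, 1 => (0, 3, 0)
  | 13, 2 => (0, 1, 3)
  | 13, 3 => (0, 4, 1)
  | 13, 4 => (0, 2, 4)
  | 14, 0 => (0, 2, 1)
  | 14, 1 => (0, 1, 0)
  | 14, 2 => (0, 0, 4)
  | 14, 3 => (0, 4, 3)
  | 14, 4 => (0, 3, 2)
  | 15, 0 => (0, 2, 0)
  | 15, 1 => (0, 0, 3)
  | 15, 2 => (0, 3, 1)
  | 15, 3 => (0, 1, 4)
  | 15, 4 => (0, 4, 2)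
  | 16, 0 => (2, 2, 1)
  | 16, 1 => (2, 1, 0)
  | 16, 2 => (2, 0, 4)
  | 16, 3 => (2, 4, 3)
  | 16, 4 => (2, 3, 2)
  | 17, 0 => (2, 2, 0)
  | 17, 1 => (2, 0, 3)
  | 17, 2 => (2, 3, 1)
  | 17, 3 => (2, 1, 4)
  | 17, 4 => (2, 4, 2)
  | 18, 0 => (1, 2, 1)
  | 18, 1 => (1, 1, 0)
  | 18, 2 => (1, 0, 4)
  | 18, 3 => (1, 4, 3)
  | 18, 4 => (1, 3, 2)
  | 19, 0 => (3, 2, 1)
  | 19, 1 => (3, 1, 0)
  | 19, 2 => (3, 0, 4)
  | 19, 3 => (3, 4, 3)
  | 19, 4 => (3, 3, 2)
  | _, _ => (0, 0, 0)
  end.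

Lemma dec45K p r : (p < 4)%N -> (r < 5)%N -> dec45 (l45 p r) = (p, r).
Proof. by case: p => [|[|[|[|p]]]] //; case: r => [|[|[|[|[|r]]]]]. Qed.

Lemma dec55K t p r : (t < 4)%N -> (p < 5)%N -> (r < 5)%N -> dec55 (l55 t p r) (u55 t p r) = (t, p, r).
Proof.
by case: t => [|[|[|[|t]]]] //; case: p => [|[|[|[|[|p]]]]] //; case: r => [|[|[|[|[|r]]]]].
Qed.

Lemma l45_lt p r : (l45 p r < 20)%N.
Proof. by case: p => [|[|[|[|p]]]]; case: r => [|[|[|[|[|r]]]]]. Qed.

Lemma l55_lt t p r : (l55 t p r < 20)%N.
Proof.
by case: t => [|[|[|[|t]]]]; case: p => [|[|[|[|[|p]]]]]; case: r => [|[|[|[|[|r]]]]].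
Qed.

Lemma s44E p r : (p < 4)%N -> (r < 4)%N -> s44 p r = (4 * p + r)%N.
Proof. by case: p => [|[|[|[|p]]]] //; case: r => [|[|[|[|r]]]]. Qed.

Lemma e44abs p r : (p < 4)%N -> (r < 4)%N -> `|e44 p r|%N = 1%N.
Proof. by case: p => [|[|[|[|p]]]] //; case: r => [|[|[|[|r]]]]. Qed.

Lemma e45abs p r : (p < 4)%N -> (r < 5)%N -> `|e45 p r|%N = 1%N.
Proof. by case: p => [|[|[|[|p]]]] //; case: r => [|[|[|[|[|r]]]]]. Qed.

Lemma e55abs t p r : (t < 4)%N -> (p < 5)%N -> (r < 5)%N -> `|e55 t p r|%N = 1%N.
Proof.
by case: t => [|[|[|[|t]]]] //; case: p => [|[|[|[|[|p]]]]] //; case: r => [|[|[|[|[|r]]]]].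
Qed.

Lemma divmod_uniq d q1 q2 t1 t2 : (t1 < d)%N -> (t2 < d)%N ->
  (q1 * d + t1 = q2 * d + t2)%N -> q1 = q2 /\ t1 = t2.
Proof.
move=> h1 h2 e.
have d0 : (0 < d)%N by lia.
have := congr1 (fun x => x %/ d)%N e.
rewrite /= !divnMDl // !divn_small // !addn0 => eq; split=> //; lia.
Qed.

Lemma MagN_bnd N l t : (l < 20)%N -> (t < N)%N -> (0 < MagN N l t <= 20 * N)%N.
Proof.
move=> hl ht; rewrite /MagN.
case: (ltnP l 4) => h4.
- case: (ltnP l 2) => h2; lia.
- case: (odd l); apply/andP; split; try lia; nia.
Qed.

Lemma blk N x y z : (0 < N)%N -> (x * N < z)%N -> (z <= x.+1 * N)%N ->
  (y * N < z)%N -> (z <= y.+1 * N)%N -> x = y.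
Proof.
move=> hN h1 h2 h3 h4.
have a : (x < y.+1)%N by rewrite -(ltn_pmul2r hN); lia.
have b : (y < x.+1)%N by rewrite -(ltn_pmul2r hN); lia.
lia.
Qed.

Lemma MagN_blk N l t : (4 <= l)%N -> (t < N)%N -> (l * N < MagN N l t <= l.+1 * N)%N.
Proof.
move=> hl ht; rewrite /MagN.
have -> : (l < 4)%N = false by lia.
case: (odd l); apply/andP; split; nia.
Qed.

Lemma MagN_inj N l1 l2 t1 t2 : (l1 < 20)%N -> (l2 < 20)%N -> (t1 < N)%N -> (t2 < N)%N ->
  MagN N l1 t1 = MagN N l2 t2 -> l1 = l2 /\ t1 = t2.
Proof.
move=> hl1 hl2 ht1 ht2 e.
have hN : (0 < N)%N by lia.
case: (ltnP l1 4) => a1; case: (ltnP l2 4) => a2.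
- move: e; rewrite /MagN.
  case: l1 a1 {hl1} => [|[|[|[|l1]]]] // _; case: l2 a2 {hl2} => [|[|[|[|l2]]]] // _ /= e; lia.
- have := @MagN_blk N l2 t2 a2 ht2; rewrite -e /MagN a1.
  have : (4 * N <= l2 * N)%N by rewrite leq_mul2r a2 orbT.
  case: ifP; lia.
- have := @MagN_blk N l1 t1 a1 ht1; rewrite e /MagN a2.
  have : (4 * N <= l1 * N)%N by rewrite leq_mul2r a1 orbT.
  case: ifP; lia.
- have h1 := @MagN_blk N l1 t1 a1 ht1; have h2 := @MagN_blk N l2 t2 a2 ht2.
  have el : l1 = l2.
    apply: (@blk N l1 l2 (MagN N l1 t1)) => //; try lia.
  subst l2; split=> //.
  move: e; rewrite /MagN; have -> : (l1 < 4)%N = false by lia.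
  case: (odd l1); lia.
Qed.

Definition locB A B (k i j : nat) : nat :=
  if (i < 4*A)%N then (k %% 4 * A + i %/ 4)%N
  else if (j < 4*B)%N then (4*A + k %% 4 * B + j %/ 4)%N
  else (4*A + 4*B + u55 (k %% 4) (i - 4*A) (j - 4*B))%N.

Definition lB A B (k i j : nat) : nat :=
  if (i < 4*A)%N then l45 (i %% 4) (j - 4*B)
  else if (j < 4*B)%N then l45 (j %% 4) (i - 4*A)
  else l55 (k %% 4) (i - 4*A) (j - 4*B).

Definition code A B (k i j : nat) : bool * nat * nat :=
  if (i < 4*A)%N && (j < 4*B)%N then (true, s44 (i %% 4) (j %% 4), ((k*A + i %/ 4)*B + j %/ 4)%N)
  else (false, lB A B k i j, (k %/ 4 * U A B + locB A B k i j)%N).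

Definition enc A B Q (x : bool * nat * nat) : nat :=
  let: (b, l, t) := x in
  if b then (20 * NN A B Q + NA A B Q * l + t + 1)%N else MagN (NN A B Q) l t.

Lemma absF A B Q k i j : (i < 4*A+5)%N -> (j < 4*B+5)%N ->
  `|F A B Q k i j|%N = enc A B Q (code A B k i j).
Proof.
move=> hi hj; rewrite /F /code /enc /lB /locB.
have h4 : forall x, (x %% 4 < 4)%N by move=> x; rewrite ltn_mod.
case: ifP => a; case: ifP => b /=; rewrite abszM absz_nat.
- by rewrite e44abs // mul1n.
- rewrite e45abs //; [ by rewrite mul1n addnA | lia].
- rewrite e45abs //; [ by rewrite mul1n !addnA | lia].
- rewrite e55abs //; [ by rewrite mul1n !addnA | lia | lia].
Qed.

Lemma locB_lt A B k i j : (0 < A)%N -> (0 < B)%N -> (i < 4*A+5)%N -> (j < 4*B+5)%N ->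
  (locB A B k i j < U A B)%N.
Proof.
move=> hA hB hi hj; rewrite /locB /U.
have hk : (k %% 4 <= 3)%N by have := ltn_mod k 4; lia.
have hkA : (k %% 4 * A <= 3 * A)%N by rewrite leq_mul2r hk orbT.
have hkB : (k %% 4 * B <= 3 * B)%N by rewrite leq_mul2r hk orbT.
have := u55_lt (k %% 4) (i - 4*A) (j - 4*B).
case: ifP => a; [lia|case: ifP => b; lia].
Qed.

Lemma code_valid A B Q k i j : (0 < A)%N -> (0 < B)%N -> (k < 4*Q)%N -> (i < 4*A+5)%N -> (j < 4*B+5)%N ->
  let: (b, l, t) := code A B k i j in
  if b then (l < 16)%N && (t < NA A B Q)%N else (l < 20)%N && (t < NN A B Q)%N.
Proof.
move=> hA hB hk hi hj; rewrite /code.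
case: ifP => /andP.
- case=> a b; apply/andP; split.
  + rewrite s44E ?ltn_mod //; lia.
  + have h1 : (k * A + i %/ 4 < 4 * Q * A)%N by apply: tau_lt => //; lia.
    have h2 := @tau_lt (4*Q*A)%N B (k*A + i %/ 4)%N (j %/ 4)%N h1.
    rewrite /NA; apply: h2; lia.
- move=> _; apply/andP; split.
  + rewrite /lB; case: ifP => _; [exact: l45_lt| case: ifP => _; [exact: l45_lt|exact: l55_lt]].
  + rewrite /NN; apply: tau_lt; [exact: hQ | exact: locB_lt].
Qed.

Lemma enc_inj A B Q x y : (0 < NA A B Q)%N ->
  (let: (b, l, t) := x in
   if b then (l < 16)%N && (t < NA A B Q)%N else (l < 20)%N && (t < NN A B Q)%N) ->
  (let: (b, l, t) := y in
   if b then (l < 16)%N && (t < NA A B Q)%N else (l < 20)%N && (t < NN A B Q)%N) ->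
  enc A B Q x = enc A B Q y -> x = y.
Proof.
case: x => [[b1 l1] t1]; case: y => [[b2 l2] t2] hNA /= v1 v2; rewrite /enc.
case: b1 v1 => /andP [a1 c1]; case: b2 v2 => /andP [a2 c2].
- move=> e.
  have e' : (l1 * NA A B Q + t1 = l2 * NA A B Q + t2)%N by lia.
  by case: (divmod_uniq c1 c2 e') => -> ->.
- have := MagN_bnd a2 c2; lia.
- have := MagN_bnd a1 c1; lia.
- by move=> e; case: (MagN_inj a1 a2 c1 c2 e) => -> ->.
Qed.

Lemma kEq k k' : (k %/ 4 = k' %/ 4)%N -> (k %% 4 = k' %% 4)%N -> k = k'.
Proof. by move=> e1 e2; rewrite (divn_eq k 4) (divn_eq k' 4) e1 e2. Qed.

Lemma codeB_inj A B k i j k' i' j' : (0 < A)%N -> (0 < B)%N ->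
  (i < 4*A+5)%N -> (j < 4*B+5)%N -> (i' < 4*A+5)%N -> (j' < 4*B+5)%N ->
  ~~ ((i < 4*A)%N && (j < 4*B)%N) -> ~~ ((i' < 4*A)%N && (j' < 4*B)%N) ->
  lB A B k i j = lB A B k' i' j' -> (k %/ 4 = k' %/ 4)%N -> locB A B k i j = locB A B k' i' j' ->
  [/\ k = k', i = i' & j = j'].
Proof.
move=> hA hB hi hj hi' hj' nij nij' el eh eloc.
have hk : (k %% 4 <= 3)%N by have := ltn_mod k 4; lia.
have hk' : (k' %% 4 <= 3)%N by have := ltn_mod k' 4; lia.
have hkA : (k %% 4 * A <= 3 * A)%N by rewrite leq_mul2r hk orbT.
have hkA' : (k' %% 4 * A <= 3 * A)%N by rewrite leq_mul2r hk' orbT.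
have hkB : (k %% 4 * B <= 3 * B)%N by rewrite leq_mul2r hk orbT.
have hkB' : (k' %% 4 * B <= 3 * B)%N by rewrite leq_mul2r hk' orbT.
have hu := u55_lt (k %% 4) (i - 4*A) (j - 4*B).
have hu' := u55_lt (k' %% 4) (i' - 4*A) (j' - 4*B).
move: el eloc; rewrite /lB /locB.
case: (ltnP i (4*A)) => a1; case: (ltnP i' (4*A)) => a2; rewrite ?a1 ?a2 /= in nij nij' *.
-
  move=> el eloc.
  have [e1 e2] : (k %% 4 = k' %% 4)%N /\ (i %/ 4 = i' %/ 4)%N.
    apply: (@divmod_uniq A); try lia.
  have h1 : (i %% 4 < 4)%N by rewrite ltn_mod.
  have h1' : (i' %% 4 < 4)%N by rewrite ltn_mod.
  have h2 : (j - 4*B < 5)%N by lia.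
  have h2' : (j' - 4*B < 5)%N by lia.
  have := dec45K h1 h2; rewrite el (dec45K h1' h2').
  case=> e3 e4; split; [exact: kEq | rewrite (divn_eq i 4) (divn_eq i' 4); congruence | lia].
- case: ifP => b2; lia.
- case: ifP => b1; lia.
- case: ifP => b1; case: ifP => b2 el eloc; try lia.
  + have [e1 e2] : (k %% 4 = k' %% 4)%N /\ (j %/ 4 = j' %/ 4)%N.
      apply: (@divmod_uniq B); try lia.
    have h1 : (j %% 4 < 4)%N by rewrite ltn_mod.
    have h1' : (j' %% 4 < 4)%N by rewrite ltn_mod.
    have h2 : (i - 4*A < 5)%N by lia.
    have h2' : (i' - 4*A < 5)%N by lia.
    have := dec45K h1 h2; rewrite el (dec45K h1' h2').
    case=> e3 e4; split; [exact: kEq | lia | rewrite (divn_eq j 4) (divn_eq j' 4); congruence].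
  + have eu : u55 (k %% 4) (i - 4*A) (j - 4*B) = u55 (k' %% 4) (i' - 4*A) (j' - 4*B) by lia.
    have h1 : (k %% 4 < 4)%N by rewrite ltn_mod.
    have h1' : (k' %% 4 < 4)%N by rewrite ltn_mod.
    have h2 : (i - 4*A < 5)%N by lia.
    have h2' : (i' - 4*A < 5)%N by lia.
    have h3 : (j - 4*B < 5)%N by lia.
    have h3' : (j' - 4*B < 5)%N by lia.
    have := dec55K h1 h2 h3; rewrite el eu (dec55K h1' h2' h3').
    case=> e1 e2 e3; split; [exact: kEq | lia | lia].
Qed.

Lemma code_inj A B k i j k' i' j' : (0 < A)%N -> (0 < B)%N ->
  (i < 4*A+5)%N -> (j < 4*B+5)%N -> (i' < 4*A+5)%N -> (j' < 4*B+5)%N ->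
  code A B k i j = code A B k' i' j' -> [/\ k = k', i = i' & j = j'].
Proof.
move=> hA hB hi hj hi' hj'; rewrite /code.
case: ifP => c1; case: ifP => c2 //.
- case=> es et.
  move/andP: c1 => [a1 b1]; move/andP: c2 => [a2 b2].
  have h1 : (i %% 4 < 4)%N by rewrite ltn_mod.
  have h1' : (i' %% 4 < 4)%N by rewrite ltn_mod.
  have h2 : (j %% 4 < 4)%N by rewrite ltn_mod.
  have h2' : (j' %% 4 < 4)%N by rewrite ltn_mod.
  rewrite !s44E // in es.
  have [e1 e2] : (i %% 4 = i' %% 4)%N /\ (j %% 4 = j' %% 4)%N.
    apply: (@divmod_uniq 4) => //; lia.
  have [e3 e4] : (k * A + i %/ 4 = k' * A + i' %/ 4)%N /\ (j %/ 4 = j' %/ 4)%N.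
    apply: (@divmod_uniq B) => //; lia.
  have [e5 e6] : k = k' /\ (i %/ 4 = i' %/ 4)%N.
    apply: (@divmod_uniq A) => //; lia.
  split=> //.
  + by rewrite (divn_eq i 4) (divn_eq i' 4) e1 e6.
  + by rewrite (divn_eq j 4) (divn_eq j' 4) e2 e4.
- case=> el et.
  have [eh eloc] : (k %/ 4 = k' %/ 4)%N /\ (locB A B k i j = locB A B k' i' j').
    by apply: (@divmod_uniq (U A B)) => //; apply: locB_lt.
  by apply: (codeB_inj hA hB hi hj hi' hj') => //; rewrite ?c1 ?c2.
Qed.

Lemma total_eq A B Q : (20 * NN A B Q + 16 * NA A B Q = (4*A+5) * (4*B+5) * (4*Q))%N.
Proof. rewrite /NN /NA /U; ring. Qed.

Lemma enc_bnd A B Q k i j : (0 < A)%N -> (0 < B)%N -> (k < 4*Q)%N -> (i < 4*A+5)%N -> (j < 4*B+5)%N ->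
  (1 <= enc A B Q (code A B k i j) <= (4*A+5) * (4*B+5) * (4*Q))%N.
Proof.
move=> hA hB hk hi hj.
have := @code_valid A B Q k i j hA hB hk hi hj; rewrite -total_eq.
case: (code A B k i j) => [[b l] t] /=; case: b => /andP [a1 a2].
- have : (NA A B Q * l <= NA A B Q * 15)%N by rewrite leq_mul2l; lia.
  lia.
- have := MagN_bnd a1 a2; lia.
Qed.

Local Close Scope ring_scope.

Theorem proposition3p2 (m n c : nat) :
  (0 < m)%N -> (0 < n)%N -> (0 < c)%N ->
  c %% 4 = 0 -> m %% 4 = 1 -> n %% 4 = 1 ->
  (9 <= m)%N -> (9 <= n)%N ->
  IHS_exists m n c.
Proof.
move=> _ _ hc0 hc hm hn hm9 hn9.
have [A eA] : exists A, m = (4*A+5)%N by exists ((m-5) %/ 4)%N; lia.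
have [B eB] : exists B, n = (4*B+5)%N by exists ((n-5) %/ 4)%N; lia.
have [Q eQ] : exists Q, c = (4*Q)%N by exists (c %/ 4)%N; lia.
have hA : (0 < A)%N by lia.
have hB : (0 < B)%N by lia.
subst m n c.
exists (fun k i j => F A B Q k i j).
have habs : forall (k : 'I_(4*Q)) (i : 'I_(4*A+5)) (j : 'I_(4*B+5)),
    `|F A B Q k i j|%N = enc A B Q (code A B k i j).
  by move=> k i j; apply: absF.
have hbnd : forall (k : 'I_(4*Q)) (i : 'I_(4*A+5)) (j : 'I_(4*B+5)),
    (1 <= `|F A B Q k i j|%N <= (4*A+5) * (4*B+5) * (4*Q))%N.
  by move=> k i j; rewrite habs; apply: enc_bnd.
have hNA : (0 < NA A B Q)%N by rewrite /NA; rewrite !muln_gt0; apply/andP; split; [|lia]; lia.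
have hinj : forall (k : 'I_(4*Q)) (i : 'I_(4*A+5)) (j : 'I_(4*B+5)) (k' : 'I_(4*Q)) (i' : 'I_(4*A+5)) (j' : 'I_(4*B+5)),
    `|F A B Q k i j|%N = `|F A B Q k' i' j'|%N -> (k, i, j) = (k', i', j').
  move=> k i j k' i' j'; rewrite !habs => e.
  have ec := enc_inj hNA (@code_valid A B Q k i j hA hB (ltn_ord k) (ltn_ord i) (ltn_ord j))
                         (@code_valid A B Q k' i' j' hA hB (ltn_ord k') (ltn_ord i') (ltn_ord j')) e.
  have [e1 e2 e3] := code_inj hA hB (ltn_ord i) (ltn_ord j) (ltn_ord i') (ltn_ord j') ec.
  by rewrite (val_inj e1) (val_inj e2) (val_inj e3).
split.
- exact: hbnd.
- exact: hinj.
- move=> v hv.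
  have hlt : forall (x : 'I_(4*Q) * 'I_(4*A+5) * 'I_(4*B+5)),
      (`|F A B Q x.1.1 x.1.2 x.2|%N - 1 < (4*A+5) * (4*B+5) * (4*Q))%N.
    by move=> [[k i] j] /=; have := hbnd k i j; lia.
  pose f := fun x => Ordinal (hlt x).
  have finj : injective f.
    move=> [[k i] j] [[k' i' j']] /(congr1 val) /= e.
    apply: hinj; have := hbnd k i j; have := hbnd k' i' j'; lia.
  have hv' : (v - 1 < (4*A+5) * (4*B+5) * (4*Q))%N by lia.
  have := @inj_card_onto _ _ f finj; rewrite !card_prod !card_ord.
  move=> /(_ _ (Ordinal hv')) /=.
  have hcd : ((4*A+5) * (4*B+5) * (4*Q) <= 4*Q * (4*A+5) * (4*B+5))%N.
    have -> : (4*Q*(4*A+5)*(4*B+5) = (4*A+5)*(4*B+5)*(4*Q))%N by ring.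
    by [].
  move=> /(_ hcd) /codomP [[[k i] j] /(congr1 val) /= ev].
  exists k, i, j; have := hbnd k i j; lia.
- move=> k i; exact: rowsum.
- move=> k j; exact: colsum.
Qed.
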